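(* Under the standing assumptions, let $H$ be a wide subgroupoid of $\mathcal G$ and set $\gamma(H)=\bigoplus_{h\in H}J_h$. Then $\gamma(H)$ is a $C(R)$-subalgebra of $R$ and $$\gamma(H)=V_R\big(R^{\beta_{\mathcal S_H}}\big),$$ where $\mathcal S_H=\{h\in H:J_h\neq\{0\}\}$ and $R^{\beta_{\mathcal S_H}}=\{r\in R:\beta_h(r1_{h^{-1}})=r1_h\ \text{for all } h\in\mathcal S_H\}$.
   Context: All rings and algebras are associative and unital. A groupoid is a nonempty set $\mathcal G$ with a partially defined associative multiplication in which every $g$ has an inverse $g^{-1}$, a left identity $r(g)=gg^{-1}$ and a right identity $d(g)=g^{-1}g$; $gh$ is defined iff $d(g)=r(h)$; $\mathcal G_0$ is the set of identities. A subgroupoid is a nonempty subset closed under inverses and defined products; it is wide if it contains $\mathcal G_0$. Standing assumptions: $K$ commutative ring, $R$ a $K$-algebra, $\mathcal G$ a finite groupoid, $\beta=(\{E_g\},\{\beta_g\})$ a unital action of $\mathcal G$ on $R$: $E_g=E_{r(g)}$ is an ideal of $R$, unital with identity $1_g$ (so $1_{g^{-1}}=1_{d(g)}$), $\beta_g:E_{g^{-1}}\to E_g$ a $K$-algebra isomorphism, $\beta_e=\mathrm{id}_{E_e}$ for $e\in\mathcal G_0$, $\beta_g\beta_h(x)=\beta_{gh}(x)$ whenever $d(g)=r(h)$, $x\in E_{h^{-1}}$; $R=\bigoplus_{e\in\mathcal G_0}E_e$; and $R$ is a $\beta$-Galois extension of $R^\beta=\{r\in R:\beta_g(r1_{g^{-1}})=r1_g\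 \forall g\}$: there exist $x_i,y_i\in R$ ($1\le i\le m$) with $\sum_i x_i\beta_g(y_i1_{g^{-1}})=1_g$ if $g\in\mathcal G_0$ and $=0$ otherwise. $C(R)$ is the center of $R$, $V_R(S)=\{r\in R: rs=sr\ \forall s\in S\}$. For $g\in\mathcal G$, $J_g=\{r\in E_g: r\beta_g(x1_{g^{-1}})=xr\ \forall x\in R\}$; the sum $\bigoplus_{h\in H}J_h$ is a direct sum inside $R$. *)

(* Defs.v *)
From HB Require Import structures.
From mathcomp Require Import all_boot all_order all_algebra.
Set Implicit Arguments. Unset Strict Implicit. Unset Printing Implicit Defensive.
Import GRing.Theory.
Local Open Scope ring_scope.

Record is_Kalgebra (K : comPzRingType) (R : pzRingType) (sc : K -> R -> R) : Prop := {
  kalg_scaleDr : forall a x y, sc a (x + y) = sc a x + sc a y;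
  kalg_scaleDl : forall a b x, sc (a + b) x = sc a x + sc b x;
  kalg_scaleA  : forall a b x, sc (a * b) x = sc a (sc b x);
  kalg_scale1  : forall x, sc 1 x = x;
  kalg_scaleAl : forall a x y, sc a (x * y) = sc a x * y;
  kalg_scaleAr : forall a x y, sc a (x * y) = x * sc a y }.

(* The partial multiplication is encoded by a total function [mul]; the
   product [mul g h] is meaningful (i.e. "defined") exactly when d(g) = r(h). *)
Section Groupoid.
Variables (T : finType) (mul : T -> T -> T) (inv : T -> T).

Definition gr_r (g : T) : T := mul g (inv g).
Definition gr_d (g : T) : T := mul (inv g) g.

Record is_groupoid : Prop := {
  gr_nonempty : (0 < #|T|)%N;
  gr_assoc : forall g h k, gr_d g = gr_r h -> gr_d h = gr_r k ->
               mul (mul g h) k = mul g (mul h k);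
  gr_r_mul : forall g h, gr_d g = gr_r h -> gr_r (mul g h) = gr_r g;
  gr_d_mul : forall g h, gr_d g = gr_r h -> gr_d (mul g h) = gr_d h;
  gr_lid : forall g, mul (gr_r g) g = g;
  gr_rid : forall g, mul g (gr_d g) = g;
  gr_invK : forall g, inv (inv g) = g }.

Definition gr_ids : {set T} := [set gr_r g | g : T].

Definition is_subgroupoid (H : {set T}) : Prop :=
  [/\ H != set0,
      (forall h, h \in H -> inv h \in H) &
      forall g h, g \in H -> h \in H -> gr_d g = gr_r h -> mul g h \in H].

Definition is_wide_subgroupoid (H : {set T}) : Prop :=
  is_subgroupoid H /\ gr_ids \subset H.

End Groupoid.

Section Action.
Variables (K : comPzRingType) (R : pzRingType) (sc : K -> R -> R).
Variables (T : finType) (mul : T -> T -> T) (inv : T -> T).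
(* E g x  means x \in E_g ; one g = 1_g ; beta g = beta_g : E_{g^-1} -> E_g *)
Variables (E : T -> R -> Prop) (one : T -> R) (beta : T -> R -> R).

Local Notation G0 := (gr_ids mul inv).

Record is_unital_action : Prop := {
  act_E_r : forall g x, E g x <-> E (gr_r mul inv g) x;
  act_E0 : forall g, E g 0;
  act_ED : forall g x y, E g x -> E g y -> E g (x + y);
  act_EN : forall g x, E g x -> E g (- x);
  act_EMl : forall g x y, E g y -> E g (x * y);
  act_EMr : forall g x y, E g y -> E g (y * x);
  act_one_in : forall g, E g (one g);
  act_one_l : forall g x, E g x -> one g * x = x;
  act_one_r : forall g x, E g x -> x * one g = x;
  act_beta_in : forall g x, E (inv g) x -> E g (beta g x);
  act_betaD : forall g x y, E (inv g) x -> E (inv g) y ->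
                beta g (x + y) = beta g x + beta g y;
  act_betaM : forall g x y, E (inv g) x -> E (inv g) y ->
                beta g (x * y) = beta g x * beta g y;
  act_betaZ : forall g a x, E (inv g) x -> beta g (sc a x) = sc a (beta g x);
  act_beta_inj : forall g x y, E (inv g) x -> E (inv g) y ->
                   beta g x = beta g y -> x = y;
  act_beta_surj : forall g y, E g y -> exists2 x, E (inv g) x & beta g x = y;
  act_beta_id : forall e x, e \in G0 -> E e x -> beta e x = x;
  act_beta_comp : forall g h x, gr_d mul inv g = gr_r mul inv h -> E (inv h) x ->
                    beta g (beta h x) = beta (mul g h) x;
  act_sum : forall x, exists f : T -> R,
              (forall e, e \in G0 -> E e (f e)) /\ x = \sum_(e in G0) f e;
  act_sum_direct : forall f : T -> R, (forall e, e \in G0 -> E e (f e)) ->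
              \sum_(e in G0) f e = 0 -> forall e, e \in G0 -> f e = 0 }.

Definition is_beta_Galois : Prop :=
  exists (m : nat) (x y : 'I_m -> R), forall g,
    \sum_(i < m) x i * beta g (y i * one (inv g)) = if g \in G0 then one g else 0.

Definition Jg (g : T) (r : R) : Prop :=
  E g r /\ forall x, r * beta g (x * one (inv g)) = x * r.

Definition gammaH (H : {set T}) (r : R) : Prop :=
  exists a : T -> R, (forall h, h \in H -> Jg h (a h)) /\ r = \sum_(h in H) a h.

Definition in_SH (H : {set T}) (h : T) : Prop :=
  h \in H /\ exists2 s, Jg h s & s <> 0.

Definition fixed_SH (H : {set T}) (r : R) : Prop :=
  forall h, in_SH H h -> beta h (r * one (inv h)) = r * one h.

End Action.

Definition centerR (R : pzRingType) (c : R) : Prop := forall x, c * x = x * c.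
Definition centralizer (R : pzRingType) (S : R -> Prop) (r : R) : Prop :=
  forall s, S s -> r * s = s * r.

Definition is_CR_subalgebra (R : pzRingType) (P : R -> Prop) : Prop :=
  [/\ P 0 /\ P 1,
      (forall x y, P x -> P y -> P (x + y)),
      (forall x, P x -> P (- x)),
      (forall x y, P x -> P y -> P (x * y)) &
      (forall c x, centerR c -> P x -> P (c * x))].

(* Main.v *)
Require Import Defs.
From HB Require Import structures.
From mathcomp Require Import all_boot all_order all_algebra.
Set Implicit Arguments. Unset Strict Implicit. Unset Printing Implicit Defensive.
Import GRing.Theory.
Local Open Scope ring_scope.

Section Gpd.
Variables (T : finType) (mul : T -> T -> T) (inv : T -> T).
Hypothesis G : is_groupoid mul inv.
Local Notation r := (gr_r mul inv).
Local Notation d := (gr_d mul inv).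
Local Notation G0 := (gr_ids mul inv).

Lemma d_inv g : d (inv g) = r g.
Proof. by rewrite /gr_d /gr_r (gr_invK G). Qed.
Lemma r_inv g : r (inv g) = d g.
Proof. by rewrite /gr_d /gr_r (gr_invK G). Qed.
Lemma r_r g : r (r g) = r g.
Proof. by rewrite {2}/gr_r (gr_r_mul G) // r_inv. Qed.
Lemma d_r g : d (r g) = r g.
Proof. by rewrite {2}/gr_r (gr_d_mul G) ?r_inv // d_inv. Qed.
Lemma G0P e : e \in G0 -> [/\ r e = e, d e = e & inv e = e].
Proof.
case/imsetP=> g _ ->; rewrite r_r d_r; split=> //.
have h1 := gr_lid G (inv (r g)).
rewrite r_inv d_r in h1. rewrite -h1. exact: (r_r g).
Qed.
Lemma r_in_G0 g : r g \in G0.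
Proof. by apply/imsetP; exists g. Qed.
Lemma d_in_G0 g : d g \in G0.
Proof. by rewrite -r_inv r_in_G0. Qed.
Lemma mul_cancel_l g h : r h = r g -> mul g (mul (inv g) h) = h.
Proof.
move=> e; rewrite -(gr_assoc G) //; last by rewrite d_inv.
  by rewrite -/(gr_r mul inv g) -e (gr_lid G).
by rewrite r_inv.
Qed.
Lemma mul_cancel_l' g h : r h = d g -> mul (inv g) (mul g h) = h.
Proof.
move=> e; have := @mul_cancel_l (inv g) h; rewrite (gr_invK G) r_inv; exact.
Qed.
End Gpd.

Section Act.
Variables (K : comPzRingType) (R : pzRingType) (sc : K -> R -> R).
Variables (T : finType) (mul : T -> T -> T) (inv : T -> T).
Variables (E : T -> R -> Prop) (one : T -> R) (beta : T -> R -> R).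
Hypothesis G : is_groupoid mul inv.
Hypothesis A : is_unital_action sc mul inv E one beta.
Local Notation r := (gr_r mul inv).
Local Notation d := (gr_d mul inv).
Local Notation G0 := (gr_ids mul inv).

Lemma E_eq g h x : r g = r h -> E g x -> E h x.
Proof.
move=> e Ex; apply/(act_E_r A h x); rewrite -e; exact/(act_E_r A g x).
Qed.
Lemma one_eq g h : r g = r h -> one g = one h.
Proof.
move=> e; have h1 : E h (one g) by apply: E_eq e (act_one_in A g).
have h2 : E g (one h) by apply: E_eq (esym e) (act_one_in A h).
by rewrite -[LHS](act_one_l A h1) (act_one_r A h2).
Qed.
Lemma E_sum g (I : finType) (P : pred I) (F : I -> R) :
  (forall i, P i -> E g (F i)) -> E g (\sum_(i | P i) F i).
Proof.
move=> HF; apply: (big_ind (E g)).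
- exact: (act_E0 A).
- exact: (act_ED A).
- exact: HF.
Qed.
Lemma orth0 e f z : e \in G0 -> f \in G0 -> e != f -> E e z -> E f z -> z = 0.
Proof.
move=> eG fG nef Ez Fz.
pose F := fun t => if t == e then z else if t == f then - z else 0.
have HF : forall t, t \in G0 -> E t (F t).
  move=> t _; rewrite /F; case: eqP => [->|_]; first exact: Ez.
  case: eqP => [->|_]; first exact: (act_EN A).
  exact: (act_E0 A).
have := act_sum_direct A HF; rewrite (bigD1 e) //= (bigD1 f) /=; last by rewrite fG eq_sym.
rewrite big1; last by move=> t /andP[/andP[_ ne1] ne2]; rewrite /F (negPf ne1) (negPf ne2).
rewrite /F eqxx eq_sym (negPf nef) eqxx addr0 subrr => /(_ erefl e eG).
by rewrite eqxx.
Qed.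
Lemma orth g h x y : r g != r h -> E g x -> E h y -> x * y = 0.
Proof.
move=> ne Ex Ey; apply: (orth0 (r_in_G0 mul inv g) (r_in_G0 mul inv h) ne).
  by apply/(act_E_r A g (x * y)); apply: (act_EMr A).
by apply/(act_E_r A h (x * y)); apply: (act_EMl A).
Qed.
Lemma one_sum : 1 = \sum_(e in G0) one e.
Proof.
have [f [Hf e1]] := act_sum A 1.
rewrite {1}e1; apply: eq_bigr => e eG.
have : one e * 1 = one e by rewrite mulr1.
rewrite e1 mulr_sumr (bigD1 e) //= big1 ?addr0.
  by rewrite (act_one_l A (Hf e eG)) => ->.
move=> e' /andP[e'G ne]; apply: (orth (g:=e) (h:=e')).
- by case: (G0P G eG) => -> _ _; case: (G0P G e'G) => -> _ _; rewrite eq_sym.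
- exact: (act_one_in A). - exact: Hf.
Qed.
Lemma beta0 g : beta g 0 = 0.
Proof.
have h0 := act_E0 A (inv g).
have := act_betaD A h0 h0; rewrite addr0 => /(congr1 (fun t => t - beta g 0)).
by rewrite subrr addrK.
Qed.
Lemma beta_sum g (I : finType) (P : pred I) (F : I -> R) :
  (forall i, P i -> E (inv g) (F i)) ->
  beta g (\sum_(i | P i) F i) = \sum_(i | P i) beta g (F i).
Proof.
move=> HF; apply: esym.
suff [] : E (inv g) (\sum_(i | P i) F i) /\ \sum_(i | P i) beta g (F i) = beta g (\sum_(i | P i) F i) by [].
apply: (big_ind2 (fun u v => E (inv g) v /\ u = beta g v)).
- by split; [exact: (act_E0 A) | rewrite beta0].
- move=> u1 v1 u2 v2 [E1 ->] [E2 ->]; split; first exact: (act_ED A).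
  by rewrite (act_betaD A).
- by move=> i Pi; split=> //; exact: HF.
Qed.
Lemma beta_one g : beta g (one (inv g)) = one g.
Proof.
have [x Ex bx] := act_beta_surj A (act_one_in A g).
have E1 := act_one_in A (inv g).
have Eb : E g (beta g (one (inv g))) by apply: (act_beta_in A).
rewrite -[LHS](act_one_r A Eb) -bx -(act_betaM A) //.
by rewrite (act_one_l A Ex).
Qed.
End Act.

Section Main.
Variables (K : comPzRingType) (R : pzRingType) (sc : K -> R -> R).
Variables (T : finType) (mul : T -> T -> T) (inv : T -> T).
Variables (E : T -> R -> Prop) (one : T -> R) (beta : T -> R -> R).
Hypothesis G : is_groupoid mul inv.
Hypothesis A : is_unital_action sc mul inv E one beta.
Variables (m : nat) (x y : 'I_m -> R).
Hypothesis Gal : forall g,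
    \sum_(i < m) x i * beta g (y i * one (inv g)) = if g \in gr_ids mul inv then one g else 0.
Local Notation r := (gr_r mul inv).
Local Notation d := (gr_d mul inv).
Local Notation G0 := (gr_ids mul inv).

Lemma E1r h z : E h (z * one h).
Proof. apply: (act_EMl A); exact: (act_one_in A). Qed.

Lemma beta_split h u z :
  beta h (u * z * one (inv h)) = beta h (u * one (inv h)) * beta h (z * one (inv h)).
Proof.
rewrite -(act_betaM A); [|exact: E1r|exact: E1r].
congr (beta h _); rewrite -[RHS]mulrA (act_one_l A (E1r _ _)).
by rewrite mulrA.
Qed.

Lemma key k h :
  \sum_(i < m) beta k (x i * one (inv k)) * beta h (y i * one (inv h)) =
  if k == h then one h else 0.
Proof.
have [erh|nrh] := eqVneq (r k) (r h); last first.
  rewrite big1; last first.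
    move=> i _; apply: (orth A nrh); apply: (act_beta_in A); exact: E1r.
  by case: eqP => // ekh; rewrite ekh eqxx in nrh.
pose g := mul (inv k) h.
have c1 : d (inv k) = r h by rewrite (d_inv G) erh.
have rg : r g = d k by rewrite /g (gr_r_mul G) // (r_inv G).
have kg : mul k g = h by rewrite /g (mul_cancel_l G).
have dg : d g = d h by rewrite /g (gr_d_mul G).
have oig : one (inv g) = one (inv h) by apply: (one_eq A); rewrite !(r_inv G).
have Egk : forall b, E g b -> E (inv k) b.
  by move=> b; apply: (E_eq A); rewrite rg (r_inv G).
have step : forall i, beta k (x i * one (inv k)) * beta h (y i * one (inv h)) =
    beta k (x i * beta g (y i * one (inv g))).
  move=> i; have Eb : E g (beta g (y i * one (inv g))) by apply: (act_beta_in A); exact: E1r.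
  rewrite -oig -kg -(act_beta_comp A); [|by rewrite rg|exact: E1r].
  rewrite -(act_betaM A); [|exact: E1r|exact: Egk].
  by rewrite -mulrA (act_one_l A (Egk _ Eb)).
rewrite (eq_bigr _ (fun i _ => step i)) -(beta_sum A); last first.
  move=> i _; apply: (act_EMl A); apply: Egk; apply: (act_beta_in A); exact: E1r.
rewrite Gal; case: ifP => gG.
  have kh : k = h.
    case: (G0P G gG) => rgg _ _.
    by rewrite -kg -rgg rg (gr_rid G).
  rewrite kh eqxx; rewrite -kh (one_eq A (g:=g) (h:=inv k)) ?(beta_one A) //.
  by rewrite rg (r_inv G).
case: eqP => [ekh|_]; last exact: (beta0 A).
by rewrite /g ekh -/(gr_d mul inv h) (d_in_G0 G) in gG.
Qed.

Variable H : {set T}.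
Hypothesis HW : is_wide_subgroupoid mul inv H.

Definition tr w := \sum_(h in H) beta h (w * one (inv h)).

Lemma G0H : G0 \subset H.
Proof. by case: HW. Qed.
Lemma Hinv h : h \in H -> inv h \in H.
Proof. by case: HW => -[_ hi _] _; apply: hi. Qed.
Lemma Hmul g h : g \in H -> h \in H -> d g = r h -> mul g h \in H.
Proof. by case: HW => -[_ _ hm] _; apply: hm. Qed.

Lemma Zid z : \sum_(j < m) x j * tr (y j * z) = z.
Proof.
rewrite /tr; under eq_bigr do rewrite mulr_sumr.
rewrite exchange_big /=.
have -> : \sum_(h in H) \sum_(j < m) x j * beta h (y j * z * one (inv h)) =
          \sum_(h in H) (if h \in G0 then one h else 0) * beta h (z * one (inv h)).
  apply: eq_bigr => h _; rewrite -Gal mulr_suml; apply: eq_bigr => j _.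
  by rewrite beta_split mulrA.
rewrite (big_setID G0) /= (setIidPr G0H) [X in _ + X]big1 ?addr0; last first.
  by move=> h /setDP[_ /negPf ->]; rewrite mul0r.
rewrite -[RHS]mulr1 (one_sum G A) mulr_sumr.
apply: eq_bigr => h hG; rewrite hG.
case: (G0P G hG) => _ _ ih; rewrite ih (act_beta_id A) //; last exact: E1r.
exact: (act_one_l A (E1r _ _)).
Qed.

Lemma tr_one w g : tr w * one g = \sum_(h in H | r h == r g) beta h (w * one (inv h)).
Proof.
rewrite /tr mulr_suml (bigID (fun h => r h == r g)) /= [X in _ + X]big1 ?addr0.
  apply: eq_bigr => h /andP[_ /eqP e]; rewrite -(one_eq A e).
  by apply: (act_one_r A); apply: (act_beta_in A); exact: E1r.
move=> h /andP[_ ne]; apply: (orth A ne); last exact: (act_one_in A).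
by apply: (act_beta_in A); exact: E1r.
Qed.

Lemma tr_fix g w : g \in H -> beta g (tr w * one (inv g)) = tr w * one g.
Proof.
move=> gH; rewrite !tr_one (beta_sum A); last first.
  move=> h /andP[_ /eqP e]; apply: (E_eq A e).
  by apply: (act_beta_in A); exact: E1r.
have -> : \sum_(h in H | r h == r (inv g)) beta g (beta h (w * one (inv h))) =
          \sum_(h in H | r h == r (inv g)) beta (mul g h) (w * one (inv (mul g h))).
  apply: eq_bigr => h /andP[_ /eqP e].
  have dgh : d g = r h by rewrite e (r_inv G).
  rewrite (act_beta_comp A); [|exact: dgh|exact: E1r].
  by rewrite (one_eq A (g:=inv h) (h:=inv (mul g h))) // !(r_inv G) (gr_d_mul G).
rewrite [RHS](reindex_onto (mul g) (mul (inv g)) (P := fun k => (k \in H) && (r k == r g))) /=; last first.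
  by move=> k /andP[_ /eqP e]; rewrite (mul_cancel_l G).
apply: eq_bigl => j; apply/idP/idP.
  case/andP=> jH /eqP e; have dgj : d g = r j by rewrite e (r_inv G).
  rewrite (Hmul gH jH dgj) (gr_r_mul G) // eqxx /=.
  by rewrite (mul_cancel_l' G) ?eqxx // -dgj.
case/andP=> /andP[gjH /eqP e] /eqP ej.
have c : d (inv g) = r (mul g j) by rewrite (d_inv G) e.
rewrite -ej (Hmul (Hinv gH) gjH c) /= (gr_r_mul G) //.
Qed.

Lemma Wid h w : h \in H ->
  \sum_(i < m) tr (w * x i) * beta h (y i * one (inv h)) = beta h (w * one (inv h)).
Proof.
move=> hH; rewrite /tr; under eq_bigr do rewrite mulr_suml.
rewrite exchange_big /=.
have -> : \sum_(k in H) \sum_(i < m) beta k (w * x i * one (inv k)) * beta h (y i * one (inv h)) =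
          \sum_(k in H) beta k (w * one (inv k)) * (if k == h then one h else 0).
  apply: eq_bigr => k _; rewrite -key mulr_sumr; apply: eq_bigr => i _.
  by rewrite beta_split mulrA.
rewrite (bigD1 h) //= eqxx big1 ?addr0.
  by apply: (act_one_r A); apply: (act_beta_in A); exact: E1r.
by move=> k /andP[_ /negPf ->]; rewrite mulr0.
Qed.


Lemma main_iff rr : gammaH inv E one beta H rr <->
                    centralizer (fixed_SH inv E one beta H) rr.
Proof.
split.
  case=> a [Ja ->] s fs; rewrite mulr_suml mulr_sumr; apply: eq_bigr => h hH.
  have [Eah Jh] := Ja h hH.
  rewrite -Jh; have [->|nz] := eqVneq (a h) 0; first by rewrite !mul0r.
  rewrite fs; last by split=> //; exists (a h) => //; exact/eqP.
  by rewrite mulrA (act_one_r A) //; apply: (act_EMr A).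
move=> C.
have comm w : rr * tr w = tr w * rr.
  apply: C => h [hH _]; exact: tr_fix.
pose a h := \sum_(i < m) x i * rr * beta h (y i * one (inv h)).
exists a; split; last first.
  rewrite /a exchange_big /=.
  have -> : \sum_(i < m) \sum_(h in H) x i * rr * beta h (y i * one (inv h)) =
            \sum_(i < m) x i * tr (y i * 1) * rr.
    apply: eq_bigr => i _; rewrite mulr1 -[RHS]mulrA -comm mulrA mulr_sumr.
    by [].
  by rewrite -mulr_suml Zid mul1r.
move=> h hH; split.
  apply: (E_sum A) => i _; apply: (act_EMl A); apply: (act_beta_in A); exact: E1r.
move=> z; rewrite /a mulr_sumr.
have -> : \sum_(i < m) z * (x i * rr * beta h (y i * one (inv h))) =
  \sum_(i < m) \sum_(j < m) x j * rr * (tr (y j * z * x i) * beta h (y i * one (inv h))).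
  apply: eq_bigr => i _; rewrite !mulrA -{1}(Zid (z * x i)) !mulr_suml.
  apply: eq_bigr => j _; rewrite -!mulrA; congr (_ * _).
  by rewrite !mulrA comm.
rewrite exchange_big mulr_suml /=; apply: eq_bigr => j _.
by rewrite -mulr_sumr Wid // beta_split !mulrA.
Qed.

End Main.

Theorem lemma3p7 (K : comPzRingType) (R : pzRingType) (sc : K -> R -> R)
  (T : finType) (mul : T -> T -> T) (inv : T -> T)
  (E : T -> R -> Prop) (one : T -> R) (beta : T -> R -> R)
  (H : {set T}) :
  is_Kalgebra sc ->
  is_groupoid mul inv ->
  is_unital_action sc mul inv E one beta ->
  is_beta_Galois mul inv one beta ->
  is_wide_subgroupoid mul inv H ->
  is_CR_subalgebra (gammaH inv E one beta H) /\
  (forall r : R, gammaH inv E one beta H r <->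
                 centralizer (fixed_SH inv E one beta H) r).
Proof.
move=> _ G A [m [x [y Gal]]] HW.
have IFF := main_iff G A Gal HW.
split=> //.
split.
- split; apply/IFF => s _; by rewrite ?mul0r ?mulr0 ?mul1r ?mulr1.
- move=> u v /IFF Cu /IFF Cv; apply/IFF => s fs.
  by rewrite mulrDl mulrDr Cu ?Cv.
- move=> u /IFF Cu; apply/IFF => s fs; by rewrite mulNr mulrN Cu.
- move=> u v /IFF Cu /IFF Cv; apply/IFF => s fs.
  by rewrite -mulrA Cv // mulrA Cu // mulrA.
- move=> c u Cc /IFF Cu; apply/IFF => s fs.
  by rewrite -mulrA Cu // mulrA Cc mulrA.
Qed.
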